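(* Consider a nonempty configuration with largest nonempty level $\lambda$, and let $G,G'$ be integers with $A(G)<2^b$ and $A(G')<2^b$. Then every level $\ell$ with $A_\ell(G)\ne A_\ell(G')$ lies in the integer interval $[\theta(H,z),\lambda]$, where $H=\max\{G,G'\}$ and $\theta(H,z)=-b-H-\lfloor\log_2z\rfloor$, and this interval contains at most $2b$ integers. In particular, at most $2b$ levels satisfy $A_\ell(G)\neq A_\ell(G')$.
   Context: Fix an integer $b\ge 2$. There is a set $\mathcal L$ of $N$ levels, which are consecutive integers. Each level $\ell$ holds a finite (possibly empty) multiset of normalized significands, each an integer in $[2^{b-1},2^b)$. Let $z$ be the total number of stored significands over all levels; assume $z<2^b$. For each level, $SS_\ell$ is the sum of its significands (so $SS_\ell=0$ iff the level is empty); set $SS_\ell=0$ for integers $\ell\notin\mathcal L$. The level weight is $W_\ell=SS_\ell2^\ell$. For an integer global shift $G$, $A_\ell(G)=\lfloor W_\ell2^G\rfloor+1$ if $SS_\ell>0$ and $A_\ell(G)=0$ if $SS_\ell=0$; $A(G)=\sum_\ell A_\ell(G)$. The configuration is nonempty if $z\ge1$. *)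

(* Defs.v *)
From HB Require Import structures.
From mathcomp Require Import all_boot all_order all_algebra.
Set Implicit Arguments. Unset Strict Implicit. Unset Printing Implicit Defensive.
Import Order.TTheory GRing.Theory Num.Theory.
Local Open Scope ring_scope.

(* A configuration: the level set is L = {lo, lo+1, ..., lo+N-1} (N consecutive
   integers); S l is the multiset (as a list) of significands stored at level l.
   Levels outside L are required (by hypothesis in the theorem) to be empty. *)

Definition SS (S : int -> seq nat) (l : int) : nat := sumn (S l).

Definition Alev (S : int -> seq nat) (l G : int) : int :=
  if (SS S l == 0)%N then 0
  else Num.floor ((SS S l)%:R * (2%:R : rat) ^ l * (2%:R : rat) ^ G) + 1.

Definition Atot (lo : int) (N : nat) (S : int -> seq nat) (G : int) : int :=
  \sum_(i < N) Alev S (lo + (i : nat)%:Z) G.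

Definition zcount (lo : int) (N : nat) (S : int -> seq nat) : nat :=
  \sum_(i < N) size (S (lo + (i : nat)%:Z)%R).

Definition theta (b : nat) (H : int) (z : nat) : int :=
  - (b%:Z) - H - (trunc_log 2 z)%:Z.

(* Main.v *)
Require Import Defs.
From HB Require Import structures.
From mathcomp Require Import all_boot all_order all_algebra.
From mathcomp Require Import zify ring lra.
Import Order.TTheory GRing.Theory Num.Theory.
Local Open Scope ring_scope.

Lemma pow2_mono (e f : int) : e <= f -> (2%:R : rat) ^ e <= 2%:R ^ f.
Proof.
move=> ef; have -> : f = e + (f - e) by ring.
rewrite expfzDr // ler_peMr ?exprz_ge0 //.
have : 0 <= f - e by rewrite subr_ge0.
case: (f - e) => // n _; rewrite -exprnP exprn_ege1 //.
Qed.

Lemma pow2_nat (n : nat) : (2%:R : rat) ^ (n : int) = (2 ^ n)%N%:R.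
Proof. by rewrite -exprnP natrX. Qed.

Lemma sumn_lb (b : nat) (s : seq nat) :
  (forall x, x \in s -> (2 ^ b.-1 <= x < 2 ^ b)%N) -> s != [::] ->
  (2 ^ b.-1 <= sumn s)%N.
Proof.
case: s => // x s H _ /=; have /andP[h _] := H x (mem_head _ _).
exact: leq_trans h (leq_addr _ _).
Qed.

Lemma sumn_ub (b : nat) (s : seq nat) :
  (forall x, x \in s -> (2 ^ b.-1 <= x < 2 ^ b)%N) -> s != [::] ->
  (sumn s < size s * 2 ^ b)%N.
Proof.
elim: s => // x s IH H _ /=.
have /andP[_ hx] := H x (mem_head _ _).
case: s IH H => [|y s] IH H /=; first by rewrite addn0 mul1n.
have := IH (fun z hz => H z (@mem_behead _ (x :: y :: s) z hz)) isT => /= h.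
rewrite mulSn; lia.
Qed.

Lemma idx_of (lo : int) (N : nat) (l : int) :
  lo <= l < lo + N%:Z -> exists i : 'I_N, lo + (i : nat)%:Z = l.
Proof.
move=> /andP[h1 h2].
have : 0 <= l - lo by rewrite subr_ge0.
case E: (l - lo) => [n|n] // _.
have hn : (n < N)%N by lia.
by exists (Ordinal hn) => /=; lia.
Qed.

Lemma Alev_ge0 S l G : 0 <= Alev S l G.
Proof.
rewrite /Alev; case: eqP => // _.
apply: addr_ge0 => //; by rewrite floor_ge0 ?mulr_ge0 ?exprz_ge0.
Qed.

Theorem mainTheorem12 (b : nat) (lo : int) (N : nat) (S : int -> seq nat)
    (lam G G' : int) :
  (2 <= b)%N ->
  (* levels outside L = [lo, lo + N) hold nothing *)
  (forall l : int, S l != [::] -> lo <= l < lo + N%:Z) ->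
  (* normalized significands *)
  (forall (l : int) (x : nat), x \in S l -> (2 ^ b.-1 <= x < 2 ^ b)%N) ->
  (* z < 2^b, and the configuration is nonempty *)
  (zcount lo N S < 2 ^ b)%N ->
  (1 <= zcount lo N S)%N ->
  (* lam is the largest nonempty level *)
  S lam != [::] ->
  (forall l : int, S l != [::] -> l <= lam) ->
  Atot lo N S G < (2 ^ b)%:Z ->
  Atot lo N S G' < (2 ^ b)%:Z ->
  [/\ (forall l : int, Alev S l G != Alev S l G' ->
          theta b (Order.max G G') (zcount lo N S) <= l <= lam),
      lam + 1 - theta b (Order.max G G') (zcount lo N S) <= (2 * b)%:Z
    & (#|[set i : 'I_N | Alev S (lo + (i : nat)%:Z) G
                          != Alev S (lo + (i : nat)%:Z) G']| <= 2 * b)%N].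
Proof.
move=> hb hL hsig hz hz1 hlam hmax hA hA'.
set z := zcount lo N S.
set H := Order.max G G'.
set k := trunc_log 2 z.
have hGH : G <= H by rewrite /H le_max lexx.
have hG'H : G' <= H by rewrite /H le_max lexx orbT.
have hAH : Atot lo N S H < (2 ^ b)%:Z.
  by rewrite /H maxEle; case: ifP.
have hzk : (z < 2 ^ k.+1)%N by apply: trunc_log_ltn.
have hkb : (k < b)%N.
  have := trunc_logP (isT : (1 < 2)%N) hz1; rewrite -/z -/k => h.
  by rewrite -(@ltn_exp2l 2) //; exact: leq_ltn_trans h hz.
have SSnz : forall l, S l != [::] -> (SS S l == 0)%N = false.
  move=> l hl; apply/negbTE; rewrite -lt0n /SS.
  have := sumn_lb _ _ (hsig l) hl; have := expn_gt0 2 b.-1; lia.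
have SS0 : forall l, S l = [::] -> SS S l = 0%N by move=> l hl; rewrite /SS hl.
have hsize : forall l, S l != [::] -> (size (S l) <= z)%N.
  move=> l hl; have [i hi] := idx_of _ _ _ (hL l hl).
  rewrite /z /zcount (bigD1 i) //= hi; exact: leq_addr.
have small : forall l G0, G0 <= H -> l < theta b H z -> S l != [::] -> Alev S l G0 = 1.
  move=> l G0 hG0 hl hS.
  rewrite /Alev SSnz //.
  suff -> : Num.floor ((SS S l)%:R * (2%:R : rat) ^ l * 2%:R ^ G0) = 0 by [].
  apply/eqP; rewrite floor_eq /= add0r; apply/andP; split.
    by rewrite ?mulr_ge0 ?exprz_ge0.
  have hSS : (SS S l < 2 ^ (b + k.+1))%N.
    rewrite /SS; apply: leq_trans (sumn_ub _ _ (hsig l) hS) _.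
    rewrite expnD mulnC leq_mul2l; apply/orP; right.
    have := hsize l hS; lia.
  rewrite -mulrA -expfzDr //.
  apply: (le_lt_trans (y := (SS S l)%:R * 2%:R ^ (- ((b + k.+1)%N : int)))).
    rewrite ler_wpM2l // pow2_mono //.
    move: hl; rewrite /theta -/k; lia.
  rewrite -exprnN exprnP pow2_nat -[X in _ < X](divrr (x := (2 ^ (b + k.+1))%N%:R)).
    rewrite ltr_pM2r ?invr_gt0 ?ltr0n ?expn_gt0 // ltr_nat //.
  by rewrite unitfE pnatr_eq0 -lt0n expn_gt0.
have hlamH : lam + H <= 0.
  rewrite leNgt; apply/negP => hpos.
  have [i hi] := idx_of _ _ _ (hL lam hlam).
  have h1 : Alev S lam H <= Atot lo N S H.
    rewrite /Atot (bigD1 i) //= hi lerDl; apply: sumr_ge0 => j _; exact: Alev_ge0.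
  have h2 : (2 ^ b)%:Z < Alev S lam H.
    rewrite /Alev SSnz // ltzD1 floor_ge_int -mulrA -expfzDr //.
    apply: (le_trans (y := (2 ^ b.-1)%N%:R * 2%:R ^ (1 : int))).
      rewrite -exprnP expr1 -natrM -expnSr prednK; last by lia.
      by rewrite pmulrn.
    apply: ler_pM; rewrite ?exprz_ge0 //.
      by rewrite ler_nat; exact: sumn_lb _ _ (hsig lam) hlam.
    by apply: pow2_mono; lia.
  have := lt_trans (lt_le_trans h2 h1) hAH; by rewrite ltxx.
have C1 : forall l : int, Alev S l G != Alev S l G' -> theta b H z <= l <= lam.
  move=> l hl; apply/andP; split; last first.
    rewrite hmax //; apply/negP => /eqP hS.
    by move: hl; rewrite /Alev SS0 // eqxx.
  rewrite leNgt; apply/negP => hlt.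
  case: (eqVneq (S l) [::]) => hS.
    by move: hl; rewrite /Alev SS0.
  by move: hl; rewrite (small l G hGH hlt hS) (small l G' hG'H hlt hS) eqxx.
have C2 : lam + 1 - theta b H z <= (2 * b)%:Z by rewrite /theta -/k; lia.
split => //.
set A := [set i : 'I_N | _].
pose f := fun i : 'I_N => (inord (absz (lo + (i : nat)%:Z - theta b H z)%R) : 'I_(2 * b).-1.+1).
have bnd : forall i : 'I_N, i \in A ->
    (absz (lo + (i : nat)%:Z - theta b H z)%R < (2 * b).-1.+1)%N /\ theta b H z <= lo + (i : nat)%:Z.
  move=> i; rewrite inE => /C1 /andP[h1 h2]; split => //; lia.
rewrite -(card_in_imset (f := f)).
  apply: leq_trans (max_card _) _; rewrite card_ord; lia.
move=> i j hi hj /(congr1 val); rewrite /f /= !inordK; try by case: (bnd _ hi); try by case: (bnd _ hj).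
move=> e; apply: val_inj => /=; case: (bnd _ hi) => _ h1; case: (bnd _ hj) => _ h2; lia.
Qed.
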